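(* Let $q_1,q_2$ be positive probability densities w.r.t. $\mu$ on a common support $\Omega$, let $n\ge1$ and $s_1,s_2\in(0,1)$ with $s_1+s_2=1$, and let $\pi\in(0,1)$. Define $$A(q_1,q_2)=\frac{1}{ns_1s_2}\left[\left(\int_\Omega\frac{q_1q_2}{s_1q_1+s_2q_2}\,d\mu\right)^{-1}-1\right].$$ Then, with the convention $0^{-2}=+\infty$, $$A(q_1,q_2)\le\frac{1}{ns_1s_2}\left[\left(1-\min\!\left(1,\sqrt{JS_\pi(q_1,q_2)/\min(\pi,1-\pi)}\right)\right)^{-2}-1\right],$$ $$A(q_1,q_2)\le\frac{1}{ns_1s_2}\left[\left(1-\min\!\left(1,\sqrt{2KL(q_1,q_2)}\right)\right)^{-2}-1\right],\qquad A(q_1,q_2)\le\frac{1}{ns_1s_2}\left[\left(1-\min\!\left(1,\sqrt{2KL(q_2,q_1)}\right)\right)^{-2}-1\right].$$ In particular, if $JS_\pi(q_1,q_2)\to0$, or $KL(q_1,q_2)\to0$, or $KL(q_2,q_1)\to0$ (with $n,s_1,s_2$ fixed), then $A(q_1,q_2)\to0$.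
   Context: $KL(p_1,p_2)=\int\log(p_1/p_2)\,p_1\,d\mu$. The weighted Jensen–Shannon divergence is $JS_\pi(q_1,q_2)=\pi KL(q_1,q_\pi)+(1-\pi)KL(q_2,q_\pi)$ with $q_\pi=\pi q_1+(1-\pi)q_2$. $A(q_1,q_2)$ is the first-order term of the asymptotic relative mean square error of the asymptotically optimal Bridge estimator of $Z_1/Z_2$ based on i.i.d. samples of sizes $ns_1$ and $ns_2$ from $q_1$ and $q_2$. *)

(* Defs.v *)
From HB Require Import structures.
From mathcomp Require Import all_boot all_order all_algebra.
From mathcomp Require Import all_classical all_reals all_analysis.
Set Implicit Arguments. Unset Strict Implicit. Unset Printing Implicit Defensive.
Import Order.TTheory GRing.Theory Num.Theory.
Import numFieldNormedType.Exports.
Local Open Scope classical_set_scope.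
Local Open Scope ring_scope.

Section Defs.
Context {d : measure_display} {T : measurableType d} {R : realType}.
Variable (mu : {measure set T -> \bar R}) (Om : set T).

Definition is_pos_density (q : T -> R) : Prop :=
  measurable_fun Om q /\ (forall x, Om x -> 0 < q x) /\
  (\int[mu]_(x in Om) (q x)%:E = 1)%E.

Definition KL (p1 p2 : T -> R) : \bar R :=
  \int[mu]_(x in Om) (ln (p1 x / p2 x) * p1 x)%:E.

Definition mixture (pi : R) (q1 q2 : T -> R) : T -> R :=
  fun x => pi * q1 x + (1 - pi) * q2 x.

Definition JS (pi : R) (q1 q2 : T -> R) : \bar R :=
  (pi%:E * KL q1 (mixture pi q1 q2) + (1 - pi)%:E * KL q2 (mixture pi q1 q2))%E.

Definition overlap (s1 s2 : R) (q1 q2 : T -> R) : \bar R :=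
  \int[mu]_(x in Om) (q1 x * q2 x / (s1 * q1 x + s2 * q2 x))%:E.

Definition Abridge (n : nat) (s1 s2 : R) (q1 q2 : T -> R) : R :=
  (n%:R * s1 * s2)^-1 * ((fine (overlap s1 s2 q1 q2))^-1 - 1).

End Defs.

Definition bound_term {R : realType} (c : R) (t : \bar R) : \bar R :=
  match t with
  | r%:E => let m := Num.min 1 (Num.sqrt r) in
            if m == 1 then +oo%E else (c * ((1 - m) ^- 2 - 1))%:E
  | +oo%E => +oo%E
  | -oo%E => (c * ((1 - 0) ^- 2 - 1))%:E
  end.

(* Main.v *)
Require Import Defs.
From HB Require Import structures.
From mathcomp Require Import all_boot all_order all_algebra.
From mathcomp Require Import all_classical all_reals all_analysis.
From mathcomp Require Import ring lra.
From mathcomp Require Import measurable_realfun.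
Set Implicit Arguments. Unset Strict Implicit. Unset Printing Implicit Defensive.
Import Order.TTheory GRing.Theory Num.Theory.
Import numFieldNormedType.Exports.
Local Open Scope classical_set_scope.
Local Open Scope ring_scope.

Section RealFacts.
Variable R : realType.

Lemma ln_le_sub1 (x : R) : 0 < x -> ln x <= x - 1.
Proof.
move=> x0; have := expR_ge1Dx (ln x); rewrite lnK ?posrE //; lra.
Qed.

Lemma kl_pt (a b : R) : 0 < a -> 0 < b ->
  2 * (a - Num.sqrt a * Num.sqrt b) <= ln (a / b) * a.
Proof.
move=> a0 b0.
set x := Num.sqrt a; set z := Num.sqrt b.
have x0 : 0 < x by rewrite sqrtr_gt0.
have z0 : 0 < z by rewrite sqrtr_gt0.
have ea : a = x ^+ 2 by rewrite sqr_sqrtr // ltW.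
have eb : b = z ^+ 2 by rewrite sqr_sqrtr // ltW.
have e1 : ln (a / b) = 2 * ln (x / z).
  rewrite ea eb -expr_div_n lnXn ?divr_gt0 //; by rewrite mulr_natl.
have e2 : ln (x / z) = - ln (z / x).
  by rewrite !ln_div ?posrE //; lra.
have h := @ln_le_sub1 (z / x) (divr_gt0 z0 x0).
rewrite e1 e2.
have hx : z / x * a = x * z by rewrite ea; field; lra.
have : - ln (z / x) * a >= (1 - z / x) * a.
  by rewrite ler_pM2r //; lra.
rewrite mulrBl mul1r hx; nra.
Qed.

Lemma js_alg (p mu x y z : R) : 0 <= mu -> mu <= p -> mu <= 1 - p ->
  z ^+ 2 = p * x ^+ 2 + (1 - p) * y ^+ 2 ->
  mu / 2 * (x ^+ 2 + y ^+ 2 - 2 * (x * y)) <=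
  p * (2 * (x ^+ 2 - x * z)) + (1 - p) * (2 * (y ^+ 2 - y * z)).
Proof.
move=> m0 mp mp' ez.
have h1 : 0 <= (p - mu) * (x - z) ^+ 2 by apply: mulr_ge0; [lra|apply: sqr_ge0].
have h2 : 0 <= (1 - p - mu) * (y - z) ^+ 2 by apply: mulr_ge0; [lra|apply: sqr_ge0].
have h3 : 0 <= mu / 2 * (x + y - 2 * z) ^+ 2 by apply: mulr_ge0; [lra|apply: sqr_ge0].
nra.
Qed.


Lemma sqrt_prod_le (a b : R) : 0 < a -> 0 < b ->
  2 * (Num.sqrt a * Num.sqrt b) <= a + b.
Proof.
move=> a0 b0.
have ea : a = Num.sqrt a ^+ 2 by rewrite sqr_sqrtr // ltW.
have eb : b = Num.sqrt b ^+ 2 by rewrite sqr_sqrtr // ltW.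
have := sqr_ge0 (Num.sqrt a - Num.sqrt b).
rewrite {3}ea {3}eb; nra.
Qed.

Lemma ov_lower (a b l s1 s2 : R) : 0 < a -> 0 < b -> 0 < s1 * a + s2 * b ->
  2 * l * (Num.sqrt a * Num.sqrt b) - l ^+ 2 * (s1 * a + s2 * b)
  <= a * b / (s1 * a + s2 * b).
Proof.
move=> a0 b0 h0.
set h := s1 * a + s2 * b.
set G := Num.sqrt a * Num.sqrt b.
have eG : a * b = G ^+ 2.
  by rewrite /G exprMn !sqr_sqrtr // ltW.
rewrite eG ler_pdivlMr //.
have := sqr_ge0 (G - l * h); nra.
Qed.

Lemma ov_upper (a b s1 s2 : R) : 0 < a -> 0 < b -> 0 < s1 -> 0 < s2 ->
  s1 + s2 = 1 -> a * b / (s1 * a + s2 * b) <= s2 * a + s1 * b.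
Proof.
move=> a0 b0 p1 p2 hs.
have h0 : 0 < s1 * a + s2 * b by apply: addr_gt0; apply: mulr_gt0.
rewrite ler_pdivrMr //.
have := sqr_ge0 (a - b).
have e : s1 = 1 - s2 by lra.
rewrite e; move=> hh.
have : 0 <= s2 * (1 - s2) * (a - b) ^+ 2 by apply: mulr_ge0 => //; apply: mulr_ge0; lra.
nra.
Qed.

Lemma ov_ge0 (a b s1 s2 : R) : 0 < a -> 0 < b -> 0 < s1 -> 0 < s2 ->
  0 <= a * b / (s1 * a + s2 * b).
Proof.
move=> a0 b0 p1 p2; apply: divr_ge0; first by apply: mulr_ge0; apply: ltW.
by apply: addr_ge0; apply: mulr_ge0; apply: ltW.
Qed.

Lemma bound_real (c O u r : R) : 0 < c -> 0 <= u -> u <= r ->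
  (1 - u) ^+ 2 <= O -> Num.sqrt r < 1 ->
  c * (O^-1 - 1) <= c * ((1 - Num.sqrt r) ^- 2 - 1).
Proof.
move=> c0 u0 ur uO sr.
rewrite ler_pM2l // lerD2r.
have r0 : 0 <= r by lra.
have sr0 : 0 <= Num.sqrt r by apply: sqrtr_ge0.
have er : r = Num.sqrt r ^+ 2 by rewrite sqr_sqrtr.
have r1 : r < 1 by rewrite er; nra.
have us : u <= Num.sqrt r.
  have : u ^+ 2 <= r by nra.
  move=> h; rewrite -(ler_pXn2r (n:=2)) ?nnegrE //; lra.
have p0 : 0 < (1 - Num.sqrt r) ^+ 2 by apply: exprn_gt0; lra.
have hO : (1 - Num.sqrt r) ^+ 2 <= O by apply: le_trans uO; nra.
by rewrite lef_pV2 ?posrE //; apply: lt_le_trans hO.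
Qed.

Lemma bound_lin (O u : R) : 0 <= u -> u <= 2^-1 ->
  (1 - u) ^+ 2 <= O -> O^-1 - 1 <= 8 * u.
Proof.
move=> u0 u1 uO.
have p0 : 0 < (1 - u) ^+ 2 by apply: exprn_gt0; lra.
have O0 : 0 < O by apply: lt_le_trans uO.
rewrite lerBlDr.
apply: (@le_trans _ _ (((1 - u) ^+ 2)^-1)).
  by rewrite lef_pV2 ?posrE.
rewrite -div1r ler_pdivrMr //.
have : 0 <= u * (2 * (2^-1 - u) * (4 * (1 - u)) + 2 - u)
  by apply: mulr_ge0 => //; nra.
nra.
Qed.

End RealFacts.

Section Meas.
Context d (T : measurableType d) (R : realType)
  (mu : {measure set T -> \bar R}) (Om : set T) (mOm : measurable Om).

Definition II (f : T -> R) := fine (\int[mu]_(x in Om) (f x)%:E)%E.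

Lemma int_mono (f g : T -> R) : measurable_fun Om f -> measurable_fun Om g ->
  (forall x, Om x -> g x <= f x) ->
  (\int[mu]_(x in Om) (g x)%:E <= \int[mu]_(x in Om) (f x)%:E)%E.
Proof.
move=> mf mg gf.
have mf' := (measurable_realfun.measurable_EFinP Om f).2 mf.
have mg' := (measurable_realfun.measurable_EFinP Om g).2 mg.
rewrite integralE [leRHS]integralE; apply: leeB.
- apply: ge0_le_integral => //.
  + by apply: measurable_funepos.
  + by apply: measurable_funepos.
  + move=> x Dx; apply: (@funepos_le _ _ Om) => //; last exact/mem_set.
    by move=> y /set_mem Oy /=; rewrite lee_fin gf.
- apply: ge0_le_integral => //.
  + by apply: measurable_funeneg.
  + by apply: measurable_funeneg.
  + move=> x Dx; apply: (@funeneg_le _ _ Om) => //; last exact/mem_set.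
    by move=> y /set_mem Oy /=; rewrite lee_fin gf.
Qed.

Lemma dens_int q : is_pos_density mu Om q -> mu.-integrable Om (EFin \o q).
Proof.
case=> mq [qp qi]; apply/integrableP; split; first by apply/measurable_realfun.measurable_EFinP.
rewrite (eq_integral (fun x => (q x)%:E)); first by rewrite qi ltry.
by move=> x /[1!inE] Ox /=; rewrite ger0_norm // ltW // qp.
Qed.

Lemma int_dom (f q1 q2 : T -> R) (k : R) :
  is_pos_density mu Om q1 -> is_pos_density mu Om q2 ->
  measurable_fun Om f -> (forall x, Om x -> `|f x| <= k * (q1 x + q2 x)) ->
  mu.-integrable Om (EFin \o f).
Proof.
move=> h1 h2 mf hb.
have i : mu.-integrable Om (fun x => (k%:E * ((EFin \o q1) \+ (EFin \o q2)) x)%E).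
  by apply: integrableZl => //; apply: integrableD => //; apply: dens_int.
apply: le_integrable i => //; first by apply/measurable_realfun.measurable_EFinP.
move=> x Ox /=; rewrite lee_fin.
apply: (le_trans (hb x Ox)); exact: ler_norm.
Qed.

Lemma int_fin (f : T -> R) : mu.-integrable Om (EFin \o f) ->
  (\int[mu]_(x in Om) (f x)%:E = (II f)%:E)%E.
Proof. by move=> h; rewrite /II fineK //; apply: integrable_fin_num. Qed.

Lemma int_lin (f g : T -> R) (k1 k2 : R) :
  mu.-integrable Om (EFin \o f) -> mu.-integrable Om (EFin \o g) ->
  (\int[mu]_(x in Om) (k1 * f x + k2 * g x)%:E = (k1 * II f + k2 * II g)%:E)%E.
Proof.
move=> hf hg.
rewrite (eq_integral (fun x => k1%:E * (f x)%:E + k2%:E * (g x)%:E)%E); last first.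
  by move=> x _; rewrite EFinD !EFinM.
rewrite integralD //; [|apply: integrableZl => //..].
by rewrite !integralZl // !int_fin // -!EFinM -EFinD.
Qed.

Lemma dens_II q : is_pos_density mu Om q -> II q = 1.
Proof. by case=> _ [_ qi]; rewrite /II qi. Qed.


Lemma lin_int (f g : T -> R) (k1 k2 : R) :
  mu.-integrable Om (EFin \o f) -> mu.-integrable Om (EFin \o g) ->
  mu.-integrable Om (EFin \o (fun x => k1 * f x + k2 * g x)).
Proof.
move=> hf hg.
have i1 := integrableZl mOm k1 hf.
have i2 := integrableZl mOm k2 hg.
have i := integrableD mOm i1 i2.
by apply: eq_integrable i => // x _ /=; rewrite EFinD !EFinM.
Qed.

Lemma lin_II (f g : T -> R) (k1 k2 : R) :
  mu.-integrable Om (EFin \o f) -> mu.-integrable Om (EFin \o g) ->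
  II (fun x => k1 * f x + k2 * g x) = k1 * II f + k2 * II g.
Proof. by move=> hf hg; rewrite /II int_lin. Qed.

Lemma meas_sqrt (f : T -> R) : measurable_fun Om f ->
  measurable_fun Om (fun x => Num.sqrt (f x)).
Proof.
move=> mf; exact: (measurableT_comp (continuous_measurable_fun (@sqrt_continuous R)) mf).
Qed.

Lemma meas_ln (f : T -> R) : measurable_fun Om f ->
  measurable_fun Om (fun x => ln (f x)).
Proof. by move=> mf; exact: (measurableT_comp (@measurable_ln R) mf). Qed.

Lemma meas_div (f g : T -> R) : measurable_fun Om f -> measurable_fun Om g ->
  (forall x, Om x -> 0 < g x) -> measurable_fun Om (fun x => f x / g x).
Proof.
move=> mf mg gp.
have m1 : measurable_fun Om (fun x => f x * expR (- ln (g x))).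
  apply: measurable_funM => //.
  apply: (measurableT_comp (continuous_measurable_fun (@continuous_expR R))).
  by apply: (measurable_funN (f := fun x => ln (g x))); apply: meas_ln.
apply: eq_measurable_fun m1 => x /[1!inE] Ox.
by rewrite expRN lnK // posrE gp.
Qed.

End Meas.

Section Core.
Context d (T : measurableType d) (R : realType)
  (mu : {measure set T -> \bar R}) (Om : set T) (mOm : measurable Om).

Lemma dens_meas q : is_pos_density mu Om q -> measurable_fun Om q.
Proof. by case. Qed.

Lemma dens_pos q : is_pos_density mu Om q -> forall x, Om x -> 0 < q x.
Proof. by case=> _ []. Qed.

Lemma int_meas (f : T -> R) : mu.-integrable Om (EFin \o f) -> measurable_fun Om f.
Proof. by move=> /integrableP[/measurable_realfun.measurable_EFinP]. Qed.

Lemma KL_ge (p r : T -> R) : is_pos_density mu Om p -> measurable_fun Om r ->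
  (forall x, Om x -> 0 < r x) ->
  mu.-integrable Om (EFin \o (fun x => Num.sqrt (p x) * Num.sqrt (r x))) ->
  ((2 * (1 - II mu Om (fun x => Num.sqrt (p x) * Num.sqrt (r x))))%:E
     <= KL mu Om p r)%E.
Proof.
move=> hp mr rp iH.
set H := (fun x => Num.sqrt (p x) * Num.sqrt (r x)).
have ip := dens_int hp.
have mp := dens_meas hp.
have := @int_mono _ _ _ mu Om mOm (fun x => ln (p x / r x) * p x)
   (fun x => 2 * p x + (-2) * H x).
rewrite int_lin // dens_II // /KL.
have e : 2 * 1 + -2 * II mu Om H = 2 * (1 - II mu Om H) by lra.
rewrite e; apply.
- apply: measurable_funM => //; apply: meas_ln; exact: meas_div.
- exact: int_meas (lin_int _ _ _ ip iH).
- move=> x Ox; have := kl_pt (dens_pos hp Ox) (rp x Ox); rewrite /H; lra.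
Qed.


Variables (q1 q2 : T -> R).
Hypotheses (h1 : is_pos_density mu Om q1) (h2 : is_pos_density mu Om q2).

Let i1 := dens_int h1.
Let i2 := dens_int h2.
Let m1 := dens_meas h1.
Let m2 := dens_meas h2.
Let p1 := dens_pos h1.
Let p2 := dens_pos h2.

Definition GG := fun x => Num.sqrt (q1 x) * Num.sqrt (q2 x).

Lemma sqrtprod_int (f g : T -> R) : measurable_fun Om f -> measurable_fun Om g ->
  (forall x, Om x -> 0 < f x) -> (forall x, Om x -> 0 < g x) ->
  (forall x, Om x -> f x + g x <= 2 * (q1 x + q2 x)) ->
  mu.-integrable Om (EFin \o (fun x => Num.sqrt (f x) * Num.sqrt (g x))).
Proof.
move=> mf mg fp gp fg.
apply: (@int_dom _ _ _ mu Om mOm _ q1 q2 1) => //.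
  by apply: measurable_funM; apply: meas_sqrt.
move=> x Ox; rewrite ger0_norm; last by apply: mulr_ge0; apply: sqrtr_ge0.
have := sqrt_prod_le (fp x Ox) (gp x Ox); have := fg x Ox; lra.
Qed.

Lemma iG : mu.-integrable Om (EFin \o GG).
Proof.
apply: sqrtprod_int => // x Ox; have := p1 Ox; have := p2 Ox; lra.
Qed.

Lemma BC_le1 : II mu Om GG <= 1.
Proof.
have := @int_mono _ _ _ mu Om mOm (fun x => 2^-1 * q1 x + 2^-1 * q2 x) GG.
rewrite int_lin // int_fin //; last exact: iG.
rewrite (dens_II h1) (dens_II h2) => H.
have : ((II mu Om GG)%:E <= (2^-1 * 1 + 2^-1 * 1)%:E)%E.
  apply: H.
  - by apply: measurable_funD; apply: measurable_funM.
  - exact: int_meas iG.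
  - move=> x Ox; have := sqrt_prod_le (p1 Ox) (p2 Ox); rewrite /GG; lra.
rewrite lee_fin; lra.
Qed.

Lemma KL12 : ((2 * (1 - II mu Om GG))%:E <= KL mu Om q1 q2)%E.
Proof. exact: KL_ge (int_meas i2) p2 iG. Qed.

Lemma KL21 : ((2 * (1 - II mu Om GG))%:E <= KL mu Om q2 q1)%E.
Proof.
have -> : GG = (fun x => Num.sqrt (q2 x) * Num.sqrt (q1 x)).
  by apply: funext => x; rewrite /GG mulrC.
apply: KL_ge (int_meas i1) p1 _ => //.
apply: sqrtprod_int => // x Ox; have := p1 Ox; have := p2 Ox; lra.
Qed.


Variables (s1 s2 : R).
Hypotheses (hs1 : 0 < s1) (hs2 : 0 < s2) (hs : s1 + s2 = 1).

Definition OV := fun x => q1 x * q2 x / (s1 * q1 x + s2 * q2 x).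

Let hp x : Om x -> 0 < s1 * q1 x + s2 * q2 x.
Proof. by move=> Ox; apply: addr_gt0; apply: mulr_gt0 => //; [apply: p1|apply: p2]. Qed.

Let mh : measurable_fun Om (fun x => s1 * q1 x + s2 * q2 x).
Proof. by apply: measurable_funD; apply: measurable_funM. Qed.

Lemma mOV : measurable_fun Om OV.
Proof. by apply: meas_div => //; apply: measurable_funM. Qed.

Lemma iOV : mu.-integrable Om (EFin \o OV).
Proof.
apply: (@int_dom _ _ _ mu Om mOm _ q1 q2 1) => //; first exact: mOV.
move=> x Ox; rewrite ger0_norm; last exact: ov_ge0 (p1 Ox) (p2 Ox) hs1 hs2.
have := ov_upper (p1 Ox) (p2 Ox) hs1 hs2 hs.
have e : s2 * q1 x + s1 * q2 x = q1 x + q2 x - (s1 * q1 x + s2 * q2 x).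
  have -> : s2 = 1 - s1 by rewrite -hs; ring.
  ring.
have := hp Ox; rewrite e /OV; lra.
Qed.

Lemma ih : mu.-integrable Om (EFin \o (fun x => s1 * q1 x + s2 * q2 x)).
Proof. exact: lin_int. Qed.

Lemma OV_props : overlap mu Om s1 s2 q1 q2 = (II mu Om OV)%:E /\
  (II mu Om GG) ^+ 2 <= II mu Om OV /\ II mu Om OV <= 1.
Proof.
split; first by rewrite /overlap -int_fin //; exact: iOV.
set B := II mu Om GG.
split.
- have := @int_mono _ _ _ mu Om mOm OV
    (fun x => (2 * B) * GG x + (- B ^+ 2) * (s1 * q1 x + s2 * q2 x)).
  rewrite int_lin //; [|exact: iG|exact: ih].
  rewrite int_fin //; last exact: iOV.
  rewrite lin_II // (dens_II h1) (dens_II h2) => H.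
  have : ((2 * B * B + - B ^+ 2 * (s1 * 1 + s2 * 1))%:E <= (II mu Om OV)%:E)%E.
    apply: H.
    - exact: mOV.
    - exact: int_meas (lin_int _ _ _ iG ih).
    - move=> x Ox; have := ov_lower B (p1 Ox) (p2 Ox) (hp Ox).
      rewrite /GG /OV; lra.
  rewrite lee_fin; have hs3 : s1 * 1 + s2 * 1 = 1 by rewrite !mulr1. rewrite hs3 mulr1; lra.
- have := @int_mono _ _ _ mu Om mOm (fun x => s2 * q1 x + s1 * q2 x) OV.
  rewrite int_lin // int_fin //; last exact: iOV.
  rewrite (dens_II h1) (dens_II h2) => H.
  have : ((II mu Om OV)%:E <= (s2 * 1 + s1 * 1)%:E)%E.
    apply: H.
    - by apply: measurable_funD; apply: measurable_funM.
    - exact: mOV.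
    - by move=> x Ox; exact: ov_upper (p1 Ox) (p2 Ox) hs1 hs2 hs.
  by rewrite lee_fin !mulr1 addrC hs.
Qed.


Variable (pi : R).
Hypothesis (hpi0 : 0 < pi) (hpi1 : pi < 1).

Lemma JS_ge : ((Num.min pi (1 - pi) * (1 - II mu Om GG))%:E <= JS mu Om pi q1 q2)%E.
Proof.
set mm := mixture pi q1 q2.
set mu0 := Num.min pi (1 - pi).
have mp x : Om x -> 0 < mm x.
  move=> Ox; rewrite /mm /mixture; apply: addr_gt0; apply: mulr_gt0 => //;
    [exact: p1|by rewrite subr_gt0|exact: p2].
have mmm : measurable_fun Om mm by apply: measurable_funD; apply: measurable_funM.
have mmle x : Om x -> mm x <= q1 x + q2 x.
  move=> Ox; rewrite /mm /mixture; have := p1 Ox; have := p2 Ox; have := hpi0; have := hpi1. nra.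
set F1 := fun x => Num.sqrt (q1 x) * Num.sqrt (mm x).
set F2 := fun x => Num.sqrt (q2 x) * Num.sqrt (mm x).
have iF1 : mu.-integrable Om (EFin \o F1).
  apply: sqrtprod_int => // x Ox; have := mmle x Ox; have := p1 Ox; have := p2 Ox; lra.
have iF2 : mu.-integrable Om (EFin \o F2).
  apply: sqrtprod_int => // x Ox; have := mmle x Ox; have := p1 Ox; have := p2 Ox; lra.
have K1 := KL_ge h1 mmm mp iF1.
have K2 := KL_ge h2 mmm mp iF2.
have hmu : 0 <= mu0 /\ mu0 <= pi /\ mu0 <= 1 - pi.
  rewrite /mu0; split; first by rewrite le_min; apply/andP; split; [exact: ltW|rewrite subr_ge0; exact: ltW].
  by split; rewrite ge_min lexx ?orbT.
have ineq : mu0 * (1 - II mu Om GG) <=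
    pi * (2 * (1 - II mu Om F1)) + (1 - pi) * (2 * (1 - II mu Om F2)).
  have i1' : mu.-integrable Om (EFin \o (fun x => 2 * q1 x + (-2) * F1 x)) by exact: lin_int.
  have i2' : mu.-integrable Om (EFin \o (fun x => 2 * q2 x + (-2) * F2 x)) by exact: lin_int.
  have := @int_mono _ _ _ mu Om mOm
    (fun x => pi * (2 * q1 x + (-2) * F1 x) + (1 - pi) * (2 * q2 x + (-2) * F2 x))
    (fun x => (mu0 / 2) * (1 * q1 x + 1 * q2 x) + (- mu0) * GG x).
  rewrite int_lin //; [|exact: lin_int|exact: iG].
  rewrite int_lin // !lin_II // (dens_II h1) (dens_II h2) => H.
  have : ((mu0 / 2 * (1 * 1 + 1 * 1) + - mu0 * II mu Om GG)%:E <=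
     (pi * (2 * 1 + -2 * II mu Om F1) + (1 - pi) * (2 * 1 + -2 * II mu Om F2))%:E)%E.
    apply: H.
    - apply: int_meas; exact: lin_int.
    - apply: int_meas; apply: lin_int => //; [exact: lin_int|exact: iG].
    - move=> x Ox.
      have ez : Num.sqrt (mm x) ^+ 2 =
          pi * Num.sqrt (q1 x) ^+ 2 + (1 - pi) * Num.sqrt (q2 x) ^+ 2.
        by rewrite (sqr_sqrtr (ltW (mp x Ox))) (sqr_sqrtr (ltW (p1 Ox)))
          (sqr_sqrtr (ltW (p2 Ox))).
      have := js_alg hmu.1 hmu.2.1 hmu.2.2 ez.
      rewrite /F1 /F2 /GG (sqr_sqrtr (ltW (p1 Ox))) (sqr_sqrtr (ltW (p2 Ox))).
      lra.
  rewrite lee_fin; lra.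
apply: le_trans (_ : ((pi * (2 * (1 - II mu Om F1)) +
   (1 - pi) * (2 * (1 - II mu Om F2)))%:E <= _)%E).
  by rewrite lee_fin.
rewrite /JS EFinD; apply: leeD.
- rewrite (EFinM pi); apply: lee_wpmul2l; first by rewrite lee_fin; exact: ltW.
  exact: K1.
- rewrite (EFinM (1 - pi)); apply: lee_wpmul2l; first by rewrite lee_fin subr_ge0; exact: ltW.
  exact: K2.
Qed.

End Core.

Lemma fin_bound (R : realType) (c O u : R) (t : \bar R) : 0 < c -> 0 <= u ->
  (1 - u) ^+ 2 <= O -> (u%:E <= t)%E ->
  ((c * (O^-1 - 1))%:E <= bound_term c t)%E.
Proof.
move=> c0 u0 uO; case: t => [r| |] //=; last by move=> _; rewrite leey.
rewrite lee_fin => ur.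
case: eqP => [_|hm]; first by rewrite leey.
rewrite lee_fin.
have hs : Num.sqrt r < 1.
  rewrite ltNge; apply/negP => h; apply: hm; exact: min_l.
have -> : Num.min 1 (Num.sqrt r) = Num.sqrt r by apply: min_r; exact: ltW.
exact: (bound_real c0 u0 ur uO hs).
Qed.

Lemma conv_u (R : realType) (v : nat -> R) (a : R) (X : nat -> \bar R) :
  0 < a -> (forall k, 0 <= v k) -> (forall k, ((a * v k)%:E <= X k)%E) ->
  X @ \oo --> (0:R)%:E -> v @ \oo --> (0:R).
Proof.
move=> a0 v0 vX hX.
have g0 : (fun k => (a * v k)%:E) @ \oo --> (0:R)%:E.
  apply: (@squeeze_cvge _ _ _ _ (fun=> (0:R)%:E) _ X) => //; last exact: cvg_cst.
  apply: nearW => k; rewrite vX andbT lee_fin; apply: mulr_ge0 => //; exact: ltW.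
have [_ h] := (fine_cvgP _ _).1 g0.
have h2 : (fun k => a^-1 * (a * v k)) @ \oo --> a^-1 * 0.
  by apply: cvgM => //; exact: cvg_cst.
rewrite mulr0 in h2.
have e : (fun k => a^-1 * (a * v k)) = v.
  by apply: funext => k; rewrite mulKf // gt_eqF.
by rewrite -e.
Qed.

Theorem proposition4 (d : measure_display) (T : measurableType d) (R : realType)
  (mu : {measure set T -> \bar R}) (Om : set T) (mOm : measurable Om)
  (n : nat) (s1 s2 pi : R)
  (hn : (0 < n)%N) (hs1 : 0 < s1 < 1) (hs2 : 0 < s2 < 1) (hs : s1 + s2 = 1)
  (hpi : 0 < pi < 1) :
  (forall q1 q2 : T -> R,
    is_pos_density mu Om q1 -> is_pos_density mu Om q2 ->
    let c := (n%:R * s1 * s2)^-1 in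
    [/\ ((Abridge mu Om n s1 s2 q1 q2)%:E <=
           bound_term c (JS mu Om pi q1 q2 * (Num.min pi (1 - pi))^-1%:E))%E,
        ((Abridge mu Om n s1 s2 q1 q2)%:E <= bound_term c (2%:E * KL mu Om q1 q2))%E
      & ((Abridge mu Om n s1 s2 q1 q2)%:E <= bound_term c (2%:E * KL mu Om q2 q1))%E])
  /\
  (forall Q1 Q2 : nat -> T -> R,
    (forall k, is_pos_density mu Om (Q1 k)) ->
    (forall k, is_pos_density mu Om (Q2 k)) ->
    ((fun k => JS mu Om pi (Q1 k) (Q2 k)) @ \oo --> (0 : R)%:E) \/
    ((fun k => KL mu Om (Q1 k) (Q2 k)) @ \oo --> (0 : R)%:E) \/
    ((fun k => KL mu Om (Q2 k) (Q1 k)) @ \oo --> (0 : R)%:E) ->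
    (fun k => Abridge mu Om n s1 s2 (Q1 k) (Q2 k)) @ \oo --> 0).
Proof.
move: hs1 hs2 hpi => /andP[s10 s11] /andP[s20 s21] /andP[pi0 pi1].
set c := (n%:R * s1 * s2)^-1.
have c0 : 0 < c.
  rewrite invr_gt0; apply: mulr_gt0 => //; apply: mulr_gt0 => //; by rewrite ltr0n.
set mu0 := Num.min pi (1 - pi).
have mu00 : 0 < mu0 by rewrite lt_min pi0 subr_gt0 pi1.
have key : forall q1 q2, is_pos_density mu Om q1 -> is_pos_density mu Om q2 ->
  let u := 1 - II mu Om (GG q1 q2) in
  let O := II mu Om (OV q1 q2 s1 s2) in
  [/\ 0 <= u, (1 - u) ^+ 2 <= O, O <= 1 &
      Abridge mu Om n s1 s2 q1 q2 = c * (O^-1 - 1)] /\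
  [/\ ((mu0 * u)%:E <= JS mu Om pi q1 q2)%E,
      ((2 * u)%:E <= KL mu Om q1 q2)%E &
      ((2 * u)%:E <= KL mu Om q2 q1)%E].
  move=> q1 q2 h1 h2 u O.
  have [eO [BO O1]] := OV_props mOm h1 h2 s10 s20 hs.
  have B1 := BC_le1 mOm h1 h2.
  split; split.
  - by rewrite /u subr_ge0.
  - by rewrite /u opprB addrC subrK.
  - exact: O1.
  - by rewrite /Abridge eO.
  - have := JS_ge mOm h1 h2 pi0 pi1; by rewrite /u /mu0.
  - have := KL12 mOm h1 h2; by rewrite /u.
  - have := KL21 mOm h1 h2; by rewrite /u.
split.
  move=> q1 q2 h1 h2 /=.
  have [[u0 uO O1 eA] [hJ hK1 hK2]] := key q1 q2 h1 h2.
  rewrite eA; split; apply: (fin_bound (u := 1 - II mu Om (GG q1 q2))) => //.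
  - have e : (1 - II mu Om (GG q1 q2))%:E =
        ((mu0 * (1 - II mu Om (GG q1 q2)))%:E * (mu0^-1)%:E)%E.
      by rewrite -EFinM mulrAC divff ?mul1r // gt_eqF.
    rewrite e; apply: lee_wpmul2r => //.
    by rewrite lee_fin invr_ge0 ltW.
  - apply: le_trans (_ : (2%:E * (2 * (1 - II mu Om (GG q1 q2)))%:E <= _)%E).
      by rewrite -EFinM lee_fin; lra.
    by apply: lee_wpmul2l.
  - apply: le_trans (_ : (2%:E * (2 * (1 - II mu Om (GG q1 q2)))%:E <= _)%E).
      by rewrite -EFinM lee_fin; lra.
    by apply: lee_wpmul2l.
move=> Q1 Q2 hQ1 hQ2 hyp.
set u := fun k => 1 - II mu Om (GG (Q1 k) (Q2 k)).
have u0 k : 0 <= u k by have [[]] := key _ _ (hQ1 k) (hQ2 k).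
have uconv : u @ \oo --> 0.
  case: hyp => [hJ|[hK|hK]].
  - apply: (conv_u (a := mu0) (X := fun k => JS mu Om pi (Q1 k) (Q2 k))) => //.
    by move=> k; have [_ []] := key _ _ (hQ1 k) (hQ2 k).
  - apply: (conv_u (a := 2) (X := fun k => KL mu Om (Q1 k) (Q2 k))) => //.
    by move=> k; have [_ []] := key _ _ (hQ1 k) (hQ2 k).
  - apply: (conv_u (a := 2) (X := fun k => KL mu Om (Q2 k) (Q1 k))) => //.
    by move=> k; have [_ []] := key _ _ (hQ1 k) (hQ2 k).
apply: (@squeeze_cvgr _ _ _ _ (fun=> 0) (fun k => c * (8 * u k))); last 2 first.
- exact: cvg_cst.
- have h2 : (fun k => c * (8 * u k)) @ \oo --> c * (8 * 0).
    by apply: cvgM; [exact: cvg_cst|apply: cvgM => //; exact: cvg_cst].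
  by rewrite !mulr0 in h2.
move/cvgrPdist_le : uconv => /(_ (2^-1)) H.
have := H ltac:(by []); apply: filterS => k hk.
have [[_ uO O1 eA] _] := key _ _ (hQ1 k) (hQ2 k).
have uk : u k <= 2^-1 by move: hk; rewrite sub0r normrN ger0_norm.
rewrite eA; apply/andP; split.
- apply: mulr_ge0; first exact: ltW.
  have Op : 0 < II mu Om (OV (Q1 k) (Q2 k) s1 s2).
    apply: lt_le_trans uO; apply: exprn_gt0; move: uk; rewrite /u; lra.
  by rewrite subr_ge0 invf_ge1.
- rewrite ler_pM2l //; exact: bound_lin.
Qed.
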